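(* Let $p$ be a prime and let $\theta\in\mathbb{F}_p((X^{-1}))$ be a counterexample to the $X$-adic Littlewood conjecture over $\mathbb{F}_p$ with finite deficiency $D(\theta)\in\mathbb{N}_0$, i.e. for every $r\ge0$ all partial quotients $A^{(r)}_j$ of the simple continued fraction expansion of $\langle X^r\theta\rangle$ satisfy $\deg(A^{(r)}_j)\le D(\theta)+1$. Then for every $m>D(\theta)$ the three $\mathbb{N}\times m$ matrices $I^{(m)}$, $H^{(m)}(\theta)$ and $J^{(m)}$ generate a digital $(D(\theta),m,3)$-net over $\mathbb{F}_p$.
   Context: $\mathbb{F}_p((X^{-1}))$ is the field of formal Laurent series $\theta=\sum_{i=j}^\infty a_iX^{-i}$ over $\mathbb{F}_p$, with $|\theta|=2^{-j}$ for $a_j\ne0$, fractional part $\langle\theta\rangle=\sum_{i\ge\max\{1,j\}}a_iX^{-i}$, $\|\theta\|=|\langle\theta\rangle|$; $\theta$ is a counterexample to the $X$-adic Littlewood conjecture if $\inf_{r\ge0,Q\in\mathbb{F}_p[X]\setminus\{0\}}|Q|\cdot\|X^rQ\theta\|>0$. Matrices (rows indexed by $1,2,\dots$, columns by $0,\dots,m-1$): $I^{(m)}$ has entry $1$ in row $k$, column $k-1$ and $0$ elsewhere; $H^{(m)}(\theta)$ has entry $a_{k+l}$ in row $k$, column $l$ (with $a_i=0$ for $1\le i<j$); $J^{(m)}$ is the upper antidiagonal matrix with entry $1$ in row $k$, column $m-k$ for $1\le k\le m$ and $0$ elsewhere. Digital point set: for $0\le n<p^m$ with base-$p$ digits $\vec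 n=(n_0,\dots,n_{m-1})^T$, compute $C_i\vec n=(y^{(i)}_1,y^{(i)}_2,\dots)^T$ mod $p$ and set $x^{(i)}_n=\sum_k y^{(i)}_kp^{-k}$. It is a digital $(t,m,3)$-net over $\mathbb{F}_p$ ($0\le t<m$) if for all $d_1,d_2,d_3\in\mathbb{N}_0$ with $d_1+d_2+d_3\le m-t$ the matrix formed by the upper $d_1$ rows of $C_1$, the upper $d_2$ rows of $C_2$ and the upper $d_3$ rows of $C_3$ has full row rank $d_1+d_2+d_3$. *)

(* Defs.v *)
From HB Require Import structures.
From mathcomp Require Import all_boot all_order all_algebra.
From mathcomp Require Import boolp.
From mathcomp Require Import zify.
Set Implicit Arguments. Unset Strict Implicit. Unset Printing Implicit Defensive.
Import Order.TTheory GRing.Theory Num.Theory.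
Local Open Scope ring_scope.

(* Formal Laurent series in X^{-1} over a ring F:
   theta = sum_i lcoef theta i * X^{-i}, with i : int,
   and lcoef theta i = 0 for all i < lbound theta. *)
Record laurent (F : nzRingType) := Laurent {
  lcoef : int -> F;
  lbound : int;
  lcoef_lb : forall i : int, i < lbound -> lcoef i = 0 }.

Section Laurent.
Variable F : nzRingType.
Implicit Types (f g : laurent F) (Q : {poly F}).

Definition lequiv f g := forall i, lcoef f i = lcoef g i.

Definition lmul_coef f g (n : int) : F :=
  let m := n - lbound f - lbound g in
  if 0 <= m then
    \sum_(t < (absz m).+1) lcoef f (lbound f + t%:Z) * lcoef g (n - lbound f - t%:Z)
  else 0.

Lemma lmul_lb f g i : i < lbound f + lbound g -> lmul_coef f g i = 0.
Proof.
move=> hi; rewrite /lmul_coef ifF //; apply/negbTE; rewrite -ltNge; lia.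
Qed.

Definition lmul f g : laurent F := @Laurent F (lmul_coef f g) _ (@lmul_lb f g).

Lemma ladd_lb f g i : i < Order.min (lbound f) (lbound g) ->
  lcoef f i + lcoef g i = 0.
Proof.
by rewrite lt_min => /andP[h1 h2]; rewrite (lcoef_lb h1) (lcoef_lb h2) addr0.
Qed.

Definition ladd f g : laurent F :=
  @Laurent F (fun i => lcoef f i + lcoef g i) _ (@ladd_lb f g).

(* a polynomial Q = sum_k Q_k X^k, i.e. coefficient of X^{-i} is Q_{-i} *)
Lemma lpoly_lb Q i : i < - (size Q)%:Z ->
  (if i <= 0 then Q`_(absz i) else 0) = 0.
Proof.
move=> hi; case: ifP => // hi0; apply: nth_default.
case: i hi hi0 => [n|n] /=; rewrite ?NegzE; lia.
Qed.

Definition lpoly Q : laurent F :=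
  @Laurent F (fun i => if i <= 0 then Q`_(absz i) else 0) _ (@lpoly_lb Q).

Lemma lfrac_lb f i : i < 1 -> (if 1 <= i then lcoef f i else 0) = 0.
Proof. by move=> hi; rewrite leNgt hi. Qed.

Definition lfrac f : laurent F :=
  @Laurent F (fun i => if 1 <= i then lcoef f i else 0) _ (@lfrac_lb f).

Definition lnonzero f := exists t : nat, lcoef f (lbound f + t%:Z) != 0.

(* absolute value |f| = 2^{-j} where j is the index of the leading
   nonzero coefficient, |0| = 0 *)
Definition lnorm f : rat :=
  match pselect (exists t : nat, lcoef f (lbound f + t%:Z) != 0) with
  | left H => (2%:Q) ^ (- (lbound f + (ex_minn H)%:Z))
  | right _ => 0
  end.

Definition ldist f : rat := lnorm (lfrac f).

Definition Xadic_LC_counterexample (theta : laurent F) : Prop :=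
  exists eps : rat, 0 < eps /\
    forall (r : nat) (Q : {poly F}), Q != 0 ->
      eps <= lnorm (lpoly Q) * ldist (lmul (lpoly ('X^r * Q)) theta).

(* one step of the continued fraction algorithm for a fractional phi:
   phi != 0 and 1/phi = A + phi' with A a polynomial and phi' fractional *)
Definition cf_step (phi : laurent F) (A : {poly F}) (phi' : laurent F) : Prop :=
  lnonzero phi /\ lequiv phi' (lfrac phi') /\
  lequiv (lmul phi (ladd (lpoly A) phi')) (lpoly 1).

Inductive cf_pq : laurent F -> {poly F} -> Prop :=
  | cf_pq_first phi A phi' : cf_step phi A phi' -> cf_pq phi A
  | cf_pq_next phi B phi' A : cf_step phi B phi' -> cf_pq phi' A -> cf_pq phi A.

End Laurent.

(* Generating matrices N x m, rows indexed by k = 1, 2, ... (entry at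
   row k is C k; row 0 unused), columns by 'I_m *)
Definition Imat (F : nzRingType) (m : nat) : nat -> 'I_m -> F :=
  fun k l => if k == (nat_of_ord l).+1 then 1 else 0.

Definition Hmat (F : nzRingType) (theta : laurent F) (m : nat) : nat -> 'I_m -> F :=
  fun k l => if (1 <= k)%N then lcoef theta (k + l)%:Z else 0.

Definition Jmat (F : nzRingType) (m : nat) : nat -> 'I_m -> F :=
  fun k l => if (1 <= k <= m)%N && (nat_of_ord l == m - k)%N then 1 else 0.

Definition upper_rows (F : nzRingType) (m d : nat) (C : nat -> 'I_m -> F) : 'M[F]_(d, m) :=
  \matrix_(i < d, j < m) C i.+1 j.

Definition digital_net (F : fieldType) (t m : nat) (C1 C2 C3 : nat -> 'I_m -> F) : Prop :=
  (t < m)%N /\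
  forall d1 d2 d3 : nat, (d1 + d2 + d3 <= m - t)%N ->
    \rank (col_mx (col_mx (upper_rows d1 C1) (upper_rows d2 C2)) (upper_rows d3 C3))
      = (d1 + d2 + d3)%N.

(* Main.v *)
Require Import Defs.
From HB Require Import structures.
From mathcomp Require Import all_boot all_order all_algebra.
From mathcomp Require Import boolp zify.
Set Implicit Arguments. Unset Strict Implicit. Unset Printing Implicit Defensive.
Import Order.TTheory GRing.Theory Num.Theory.
Local Open Scope ring_scope.

Section LS.
Variable F : fieldType.
Implicit Types (f g h : laurent F) (Q P : {poly F}).

Definition valid f (L : int) := forall i, i < L -> lcoef f i = 0.

Lemma valid_lb f : valid f (lbound f).
Proof. exact: lcoef_lb. Qed.

Lemma valid_le f L L' : valid f L -> L' <= L -> valid f L'.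
Proof. by move=> h hl i hi; apply: h; exact: lt_le_trans hi hl. Qed.

Lemma valid_equiv f g L : lequiv f g -> valid f L -> valid g L.
Proof. by move=> e h i hi; rewrite -e h. Qed.

Definition Ssum f g (n K : int) (M : nat) :=
  \sum_(u < M) lcoef f (K + u%:Z) * lcoef g (n - K - u%:Z).

Lemma S_top f g n K M M' Lg : valid g Lg -> n - K - Lg < M%:Z -> (M <= M')%N ->
  Ssum f g n K M = Ssum f g n K M'.
Proof.
move=> hg hM hMM'; rewrite /Ssum -(subnKC hMM') big_split_ord /=.
rewrite [X in _ = _ + X]big1 ?addr0 // => u _.
by rewrite hg ?mulr0 //; lia.
Qed.

Lemma S_bot f g n K1 K2 M : valid f K2 -> K1 <= K2 ->
  Ssum f g n K1 (absz (K2 - K1) + M) = Ssum f g n K2 M.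
Proof.
move=> hf hK; rewrite /Ssum big_split_ord /= big1 ?add0r.
  by apply: eq_bigr => u _; congr (lcoef _ _ * lcoef _ _); lia.
by move=> u _; rewrite hf ?mul0r //=; have := ltn_ord u; lia.
Qed.

Lemma S_indep f g n K1 K2 M1 M2 L1 L2 : valid f K1 -> valid f K2 ->
  valid g L1 -> valid g L2 -> n - K1 - L1 < M1%:Z -> n - K2 - L2 < M2%:Z ->
  Ssum f g n K1 M1 = Ssum f g n K2 M2.
Proof.
wlog hle : K1 K2 M1 M2 L1 L2 / K1 <= K2.
  move=> W h1 h2 h3 h4 h5 h6; have [h|h] := leP K1 K2; first exact: (W K1 K2 M1 M2 L1 L2).
  by symmetry; apply: (W K2 K1 M2 M1 L2 L1) => //; apply: ltW.
move=> h1 h2 h3 h4 h5 h6; rewrite -(S_bot _ _ M2 h2 hle).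
case: (leqP M1 (absz (K2 - K1) + M2)) => h.
  by apply: S_top h3 h5 h.
by symmetry; apply: (@S_top f g n K1 _ _ L2 h4 _ (ltnW h)); lia.
Qed.

Lemma lmul_S f g n Lf Lg M : valid f Lf -> valid g Lg -> n - Lf - Lg < M%:Z ->
  lcoef (lmul f g) n = Ssum f g n Lf M.
Proof.
move=> hf hg hM; rewrite /= /lmul_coef; case: ifP => hm.
  apply: (S_indep (@valid_lb f) hf (@valid_lb g) hg _ hM); lia.
symmetry; rewrite (S_indep (K2 := lbound f) (M2 := 0) (L2 := lbound g) hf _ hg) //.
  by rewrite /Ssum big_ord0.
  exact: valid_lb.
  exact: valid_lb.
move/negbT: hm; rewrite -ltNge; lia.
Qed.

Lemma valid_mul f g Lf Lg : valid f Lf -> valid g Lg -> valid (lmul f g) (Lf + Lg).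
Proof.
move=> hf hg i hi; rewrite (lmul_S (M := 0) hf hg) ?/Ssum ?big_ord0 //; lia.
Qed.

Lemma lmul_lead f g Lf Lg : valid f Lf -> valid g Lg ->
  lcoef (lmul f g) (Lf + Lg) = lcoef f Lf * lcoef g Lg.
Proof.
move=> hf hg; rewrite (lmul_S (M := 1) hf hg); last lia.
by rewrite /Ssum big_ord1 /=; congr (lcoef _ _ * lcoef _ _); lia.
Qed.

Lemma ltz_absS (x : int) : x < (absz x).+1%:Z.
Proof. lia. Qed.

Lemma lmul_congr f f' g g' : lequiv f f' -> lequiv g g' ->
  lequiv (lmul f g) (lmul f' g').
Proof.
move=> ef eg n.
have vf := @valid_lb f; have vg := @valid_lb g.
rewrite (lmul_S vf vg (ltz_absS _)).
rewrite (lmul_S (valid_equiv ef vf) (valid_equiv eg vg) (ltz_absS _)).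
by apply: eq_bigr => u _; rewrite ef eg.
Qed.

Lemma valid_add f g L : valid f L -> valid g L -> valid (ladd f g) L.
Proof. by move=> hf hg i hi /=; rewrite hf ?hg ?addr0. Qed.

Lemma min_lb (a b : int) : (Order.min a b <= a) && (Order.min a b <= b).
Proof. by rewrite ge_min lexx ge_min lexx orbT. Qed.

Lemma lmulDr f g h : lequiv (lmul f (ladd g h)) (ladd (lmul f g) (lmul f h)).
Proof.
move=> n; have vf := @valid_lb f.
have /andP[h1 h2] := min_lb (lbound g) (lbound h).
have vg := valid_le (@valid_lb g) h1; have vh := valid_le (@valid_lb h) h2.
transitivity (lcoef (lmul f g) n + lcoef (lmul f h) n); last reflexivity.
rewrite (lmul_S vf (valid_add vg vh) (ltz_absS _)).
rewrite (lmul_S vf vg (ltz_absS _)) (lmul_S vf vh (ltz_absS _)).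
by rewrite /Ssum -big_split /=; apply: eq_bigr => u _; rewrite mulrDr.
Qed.

Lemma lmulDl f g h : lequiv (lmul (ladd f g) h) (ladd (lmul f h) (lmul g h)).
Proof.
move=> n; have vh := @valid_lb h.
have /andP[h1 h2] := min_lb (lbound f) (lbound g).
have vf := valid_le (@valid_lb f) h1; have vg := valid_le (@valid_lb g) h2.
transitivity (lcoef (lmul f h) n + lcoef (lmul g h) n); last reflexivity.
rewrite (lmul_S (valid_add vf vg) vh (ltz_absS _)).
rewrite (lmul_S vf vh (ltz_absS _)) (lmul_S vg vh (ltz_absS _)).
by rewrite /Ssum -big_split /=; apply: eq_bigr => u _; rewrite mulrDl.
Qed.

Definition tr f L N : {poly F} := \poly_(t < N) lcoef f (L + t%:Z).

Lemma lmul_tr f g Lf Lg N (t : nat) : valid f Lf -> valid g Lg -> (t < N)%N ->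
  lcoef (lmul f g) (Lf + Lg + t%:Z) = (tr f Lf N * tr g Lg N)`_t.
Proof.
move=> hf hg ht; rewrite coefM (lmul_S (M := t.+1) hf hg); last first.
  have -> : Lf + Lg + t%:Z - Lf - Lg = t%:Z by lia.
  by rewrite ltz_nat.
apply: eq_bigr => u _; have hu : (u <= t)%N by rewrite -ltnS ltn_ord.
rewrite !coef_poly (leq_ltn_trans hu ht) (leq_ltn_trans (leq_subr u t) ht).
congr (_ * lcoef _ _).
move: hu; clear; lia.
Qed.

Lemma coefM_congr Q Q' P P' (t : nat) :
  (forall u, (u <= t)%N -> Q`_u = Q'`_u) -> (forall u, (u <= t)%N -> P`_u = P'`_u) ->
  (Q * P)`_t = (Q' * P')`_t.
Proof.
move=> hQ hP; rewrite !coefM; apply: eq_bigr => u _.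
have hu : (u <= t)%N by rewrite -ltnS ltn_ord.
by rewrite hQ // hP // leq_subr.
Qed.

Lemma tr_mul f g Lf Lg (t : nat) u : valid f Lf -> valid g Lg -> (u <= t)%N ->
  (tr (lmul f g) (Lf + Lg) t.+1)`_u = (tr f Lf t.+1 * tr g Lg t.+1)`_u.
Proof.
move=> hf hg hu; rewrite coef_poly ltnS hu (lmul_tr (N := t.+1)) //.
Qed.

Lemma decomp (i L : int) : exists (L' : int) (t : nat), L' <= L /\ i = L' + t%:Z.
Proof.
case: (lerP L i) => h.
  by exists L, (absz (i - L)); split => //; lia.
by exists i, 0%N; split; [exact: ltW | rewrite addr0].
Qed.

Lemma lmulA f g h : lequiv (lmul f (lmul g h)) (lmul (lmul f g) h).
Proof.
move=> i; have [L0 [t [hL0 ->]]] := decomp i (lbound f + lbound g + lbound h).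
have vf : valid f (L0 - lbound g - lbound h).
  by apply: valid_le (@valid_lb f) _; lia.
have vg := @valid_lb g; have vh := @valid_lb h.
rewrite (_ : L0 = (L0 - lbound g - lbound h) + (lbound g + lbound h)); last lia.
rewrite (lmul_tr (N := t.+1) vf (valid_mul vg vh)) //.
rewrite addrA (lmul_tr (N := t.+1) (valid_mul vf vg) vh) //.
set Lf := L0 - lbound g - lbound h.
have e1 : (tr f Lf t.+1 * tr (lmul g h) (lbound g + lbound h) t.+1)`_t =
   (tr f Lf t.+1 * (tr g (lbound g) t.+1 * tr h (lbound h) t.+1))`_t :=
   coefM_congr (fun u _ => erefl) (fun u hu => tr_mul vg vh hu).
have e2 : (tr (lmul f g) (Lf + lbound g) t.+1 * tr h (lbound h) t.+1)`_t =
   ((tr f Lf t.+1 * tr g (lbound g) t.+1) * tr h (lbound h) t.+1)`_t :=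
   coefM_congr (fun u hu => tr_mul vf vg hu) (fun u _ => erefl).
rewrite e1 e2.
by rewrite mulrA.
Qed.
Lemma aux1 (n K : int) (s M : nat) : (s <= M)%N -> K <= n ->
  n - K - - (s%:Z) < (absz (n - K) + M.+1)%N%:Z.
Proof. move=> *; lia. Qed.

Lemma aux3 (i : int) (s : nat) : i < 1 - s%:Z -> (s <= absz i)%N.
Proof. move=> *; lia. Qed.

Lemma aux4 (t k : nat) (L : int) : (k < t.+1)%N ->
  absz (t%:Z - L - k%:Z + L) = (t - k)%N.
Proof. move=> *; lia. Qed.

Lemma aux5 (t k : nat) (L : int) : (k < t.+1)%N -> - L <= t%:Z - L - k%:Z.
Proof. move=> *; lia. Qed.

Lemma aux2 (n K : int) (s M : nat) : (s <= M)%N -> K <= n ->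
  (s <= absz (n - K - (absz (n - K)%R + M)%N%:Z)%R)%N.
Proof. move=> *; lia. Qed.

Lemma lmulC f g : lequiv (lmul f g) (lmul g f).
Proof.
move=> i; have [L0 [t [hL0 ->]]] := decomp i (lbound f + lbound g).
have vf : valid f (L0 - lbound g).
  by apply: valid_le (@valid_lb f) _; move: hL0; clear; lia.
have vg := @valid_lb g.
rewrite (_ : L0 = (L0 - lbound g) + lbound g); last by rewrite subrK.
set Lf := L0 - lbound g.
rewrite (lmul_tr (N := t.+1) vf vg) // [Lf + lbound g]addrC.
by rewrite (lmul_tr (N := t.+1) vg vf) // mulrC.
Qed.

Lemma lcoef_lpoly Q i : lcoef (lpoly Q) i = if i <= 0 then Q`_(absz i) else 0.
Proof. by []. Qed.

Lemma lmul_polyE f Q n M : (size Q <= M)%N ->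
  lcoef (lmul f (lpoly Q)) n = \sum_(u < M) lcoef f (n + u%:Z) * Q`_u.
Proof.
move=> hM; have [K [h1 h2]] : exists K, K <= lbound f /\ K <= n.
  by have /andP[h1 h2] := min_lb (lbound f) n; exists (Order.min (lbound f) n).
have vf := valid_le (@valid_lb f) h1.
have vQ := @valid_lb (lpoly Q).
rewrite (lmul_S (M := (absz (n - K)%R + M.+1)%N) vf vQ); last first.
  exact: aux1.
rewrite /Ssum big_split_ord /= big1 ?add0r; last first.
  move=> u _; rewrite ?lcoef_lpoly ifF ?mulr0 //.
  apply/negbTE; rewrite -ltNge; have := ltn_ord u; move: h2; clear; lia.
rewrite big_ord_recr /= [X in _ + X](_ : _ = 0) ?addr0; last first.
  rewrite ?lcoef_lpoly; case: ifP => _; last by rewrite mulr0.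
  by rewrite nth_default ?mulr0 //; apply: aux2.
apply: eq_bigr => u _.
have e1 : K + (absz (n - K)%R + u)%N%:Z = n + u%:Z by move: h2; clear; lia.
have e2 : n - K - (absz (n - K)%R + u)%N%:Z = - u%:Z by move: h2; clear; lia.
by rewrite e1 ?lcoef_lpoly e2 oppr_le0 lez_nat abszN absz_nat.
Qed.

Lemma lmul_polyE' Q f n M : (size Q <= M)%N ->
  lcoef (lmul (lpoly Q) f) n = \sum_(u < M) Q`_u * lcoef f (n + u%:Z).
Proof.
move=> hM; rewrite lmulC (lmul_polyE _ _ hM).
by apply: eq_bigr => u _; rewrite mulrC.
Qed.

Lemma lmul1 f : lequiv (lmul f (lpoly 1)) f.
Proof.
move=> n; rewrite (@lmul_polyE f 1 n 1) ?size_poly1 // big_ord1 /= addr0.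
by rewrite coef1 mulr1.
Qed.

Lemma lmul0l f g : (forall i, lcoef f i = 0) -> forall n, lcoef (lmul f g) n = 0.
Proof.
move=> H n; rewrite (lmul_S (@valid_lb f) (@valid_lb g) (ltz_absS _)).
by rewrite /Ssum big1 // => u _; rewrite H mul0r.
Qed.

Definition pp f (K : nat) : {poly F} := \poly_(k < K) lcoef f (- k%:Z).

Lemma decompE f (K : nat) : valid f (1 - K%:Z) ->
  lequiv f (ladd (lpoly (pp f K)) (lfrac f)).
Proof.
move=> hf i /=; case: (lerP i 0) => hi.
  rewrite [1 <= i]leNgt (le_lt_trans hi ltr01) /= addr0 coef_poly.
  case: ltnP => hk.
    by congr lcoef; move: hi; clear; lia.
  by rewrite hf //; move: hi hk; clear; lia.
rewrite add0r ifT //; move: hi; clear; lia.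
Qed.

Lemma valid_lpoly Q : valid (lpoly Q) (1 - (size Q)%:Z).
Proof.
move=> i hi; rewrite lcoef_lpoly; case: ifP => // _.
by apply: nth_default; apply: aux3.
Qed.

Lemma lpoly_lead Q : Q != 0 -> lcoef (lpoly Q) (1 - (size Q)%:Z) = lead_coef Q.
Proof.
move=> hQ; have hs : (0 < size Q)%N by rewrite size_poly_gt0.
rewrite lcoef_lpoly ifT; last by move: hs; clear; lia.
by rewrite /lead_coef; congr Q`_ _; move: hs; clear; lia.
Qed.

Fixpoint Winv (u : nat -> F) (n : nat) : nat -> F :=
  match n with
  | 0 => fun _ => (u 0%N)^-1
  | n'.+1 => fun i => if (i <= n')%N then Winv u n' i
      else - (u 0%N)^-1 * \sum_(k < n'.+1) u k.+1 * Winv u n' (n' - k)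
  end.

Lemma Winv_pre u n i : (i <= n)%N -> Winv u n i = Winv u i i.
Proof.
elim: n i => [|n IH] i hi.
  by have -> : i = 0%N by case: i hi.
case: (leqP i n) => h.
  by rewrite /= h IH.
by have -> : i = n.+1 by apply/eqP; rewrite eqn_leq hi h.
Qed.

Definition wv u i := Winv u i i.

Lemma Winv_rec u t : u 0%N != 0 ->
  \sum_(k < t.+1) u k * wv u (t - k)%N = (t == 0%N)%:R.
Proof.
case: t => [|n] hu.
  by rewrite big_ord1 /= /wv /= mulfV.
rewrite big_ord_recl /= subn0 /wv /= ltnn.
have -> : \sum_(i < n.+1) u (bump 0 i) * Winv u (n.+1 - bump 0 i) (n.+1 - bump 0 i)
  = \sum_(k < n.+1) u k.+1 * Winv u n (n - k).
  by apply: eq_bigr => k _; rewrite /bump leq0n add1n subSS (Winv_pre u (leq_subr k n)).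
by rewrite mulrA mulrN mulfV // mulN1r addNr.
Qed.

Lemma linv_lb f (L i : int) : i < - L ->
  (if - L <= i then wv (fun k => lcoef f (L + k%:Z)) (absz (i + L)) else 0) = 0.
Proof. by move=> hi; rewrite leNgt hi. Qed.

Definition linv f L : laurent F := @Laurent F _ _ (@linv_lb f L).

Lemma linv_spec f L : valid f L -> lcoef f L != 0 ->
  [/\ valid (linv f L) (- L), lcoef (linv f L) (- L) != 0 &
      lequiv (lmul f (linv f L)) (lpoly 1)].
Proof.
move=> hf hL; split.
- exact: (@valid_lb (linv f L)).
- by rewrite /= lexx addNr /wv /= addr0 invr_eq0.
move=> n; case: (ltrP n 0) => hn.
  rewrite (valid_mul hf (@valid_lb (linv f L))); last by rewrite /= addrN.
  rewrite lcoef_lpoly ifT ?ltW // coef1.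
  by case: eqP => //; move: hn; clear; lia.
have [t ->] : exists t : nat, n = t%:Z by exists (absz n); move: hn; clear; lia.
rewrite (lmul_S (M := t.+1) hf (@valid_lb (linv f L))); last by rewrite /=; clear; lia.
rewrite /Ssum /=.
have hu : (fun k : nat => lcoef f (L + k%:Z)) 0%N != 0 by rewrite /= addr0.
transitivity (\sum_(k < t.+1) (fun k : nat => lcoef f (L + k%:Z)) k *
    wv (fun k : nat => lcoef f (L + k%:Z)) (t - k)%N).
  apply: eq_bigr => k _; have hk := ltn_ord k.
  by rewrite ifT ?aux4 // aux5.
rewrite Winv_rec //; case: t => [|t] //=.
by rewrite coef1.
Qed.
End LS.


Section K.
Variable F : fieldType.
Implicit Types (f g h : laurent F) (Q P : {poly F}).

Definition IR (phi : laurent F) := forall Q : {poly F}, Q != 0 ->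
  exists j : int, 0 < j /\ lcoef (lmul (lpoly Q) phi) j != 0.
Definition CFB (B : nat) (phi : laurent F) :=
  forall A, cf_pq phi A -> ((size A).-1 <= B)%N.

Lemma lcoef_ladd f g i : lcoef (ladd f g) i = lcoef f i + lcoef g i.
Proof. by []. Qed.

Lemma aux6 (j : int) (u : nat) : 0 < j -> (j + u%:Z <= 0) = false.
Proof. move=> *; lia. Qed.

Lemma lmul_pp0 P A j : 0 < j -> lcoef (lmul (lpoly P) (lpoly A)) j = 0.
Proof.
move=> hj; rewrite (lmul_polyE' (Q := P) (lpoly A) j (M := size P) (leqnn _)).
by rewrite big1 // => u _; rewrite lcoef_lpoly aux6 // mulr0.
Qed.

Lemma chain phi psi A phi' Q (K : nat) :
  lequiv (lmul phi psi) (lpoly 1) -> lequiv psi (ladd (lpoly A) phi') ->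
  valid (lmul (lpoly Q) phi) (1 - K%:Z) -> forall j, 0 < j ->
  lcoef (lmul (lpoly (pp (lmul (lpoly Q) phi) K)) phi') j +
  lcoef (lmul (lfrac (lmul (lpoly Q) phi)) psi) j = 0.
Proof.
move=> hp hd hv j hj.
set g := lmul (lpoly Q) phi; set P := pp g K.
have e0 : lcoef (lpoly Q) j = 0 by rewrite lcoef_lpoly leNgt hj.
have : lcoef (lpoly Q) j = lcoef (lmul (lpoly P) (lpoly A)) j +
   lcoef (lmul (lpoly P) phi') j + lcoef (lmul (lfrac g) psi) j.
  rewrite -(lmul1 (lpoly Q) j) -(lmul_congr (fun _ => erefl) hp j) (lmulA _ _ _ j) -/g.
  rewrite (lmul_congr (decompE hv) (fun _ => erefl) j) (lmulDl _ _ _ j) lcoef_ladd.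
  by rewrite (lmul_congr (fun _ => erefl) hd j) (lmulDr _ _ _ j) lcoef_ladd.
by rewrite e0 lmul_pp0 // add0r => <-.
Qed.

Lemma aux7 (L : int) : 1 - (absz (1 - L))%:Z <= L.
Proof. lia. Qed.

Lemma IR_next phi psi A phi' : IR phi -> lequiv (lmul phi psi) (lpoly 1) ->
  lequiv psi (ladd (lpoly A) phi') -> IR phi'.
Proof.
move=> ir hp hd P hP.
case: (pselect (exists j : int, 0 < j /\ lcoef (lmul (lpoly P) phi') j != 0)) => // hne.
exfalso.
have H : forall j, 0 < j -> lcoef (lmul (lpoly P) phi') j = 0.
  move=> j hj; case: (eqVneq (lcoef (lmul (lpoly P) phi') j) 0) => // hn.
  by exfalso; apply: hne; exists j.
set g2 := lmul (lpoly P) psi.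
have hg2 : forall j, 0 < j -> lcoef g2 j = 0.
  move=> j hj; rewrite (lmul_congr (fun _ => erefl) hd j) (lmulDr _ _ _ j) lcoef_ladd.
  by rewrite lmul_pp0 // H // addr0.
have vg2 := valid_mul (valid_lpoly (Q := P)) (valid_lb (f := psi)).
set L2 := _ + _ in vg2.
have vg2' := valid_le vg2 (aux7 L2).
have hdec2 := decompE vg2'.
set R := pp g2 _ in hdec2.
have hz : forall i, lcoef (lfrac g2) i = 0.
  by move=> i /=; case: ifP => // hi; apply: hg2; move: hi; clear; lia.
have hq : lequiv (lmul psi phi) (lpoly 1) := fun i => etrans (lmulC psi phi i) (hp i).
have chP : forall i, lcoef (lpoly P) i = lcoef (lmul g2 phi) i.
  move=> i; rewrite -(lmul1 (lpoly P) i) -(lmul_congr (fun _ => erefl) hq i).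
  by rewrite (lmulA _ _ _ i).
have hRj : forall j, 0 < j -> lcoef (lmul (lpoly R) phi) j = 0.
  move=> j hj; have := chP j.
  rewrite (lmul_congr hdec2 (fun _ => erefl) j) (lmulDl _ _ _ j) lcoef_ladd.
  by rewrite (lmul0l _ hz) addr0 lcoef_lpoly leNgt hj => <-.
have hR : R = 0.
  case: (eqVneq R 0) => // hR; have [j [hj hjn]] := ir R hR.
  by rewrite hRj ?eqxx in hjn.
have hg0 : forall i, lcoef g2 i = 0.
  by move=> i; rewrite hdec2 lcoef_ladd hz addr0 hR lcoef_lpoly coef0; case: ifP.
have hP0 : P = 0.
  apply/polyP => k; rewrite coef0.
  have := chP (- k%:Z); rewrite (lmul0l _ hg0) lcoef_lpoly oppr_le0 lez_nat.
  by rewrite abszN absz_nat.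
by rewrite hP0 eqxx in hP.
Qed.

Lemma aux8 (j : int) : 0 < j -> 1 + (absz (j - 1))%:Z = j.
Proof. move=> *; lia. Qed.
Lemma aux9 (L : int) : 0 <= L -> 1 - ((absz L).+1)%:Z <= - L.
Proof. move=> *; lia. Qed.
Lemma aux10 (a L : int) : a <= L -> a + (absz (L - a))%:Z = L.
Proof. move=> *; lia. Qed.
Lemma aux11 (s B : nat) (L : int) : (0 < s)%N -> 1 <= L -> (absz L <= B)%N ->
   0 < 1 - s%:Z + L -> 1 - s%:Z + L <= ((s.-1 + B)%N)%:Z.
Proof. move=> *; lia. Qed.
Lemma aux12 (s : nat) (L : int) : 1 <= L -> 1 - s%:Z <= 1 - s%:Z + L.
Proof. move=> *; lia. Qed.
Lemma aux13 (s : nat) (j0 : int) : j0 <= 0 -> 1 - s%:Z <= j0 -> (absz j0 < s)%N.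
Proof. move=> *; lia. Qed.
Lemma aux14 (j0 : int) (k : nat) : j0 <= 0 -> ((absz j0).+1 <= k)%N -> - k%:Z < j0.
Proof. move=> *; lia. Qed.
Lemma aux15 (s : nat) (L j0 : int) : 1 <= L -> j0 = 1 - s%:Z + L -> j0 <= 0 ->
  ((absz j0).+1 < s)%N.
Proof. move=> *; lia. Qed.
Lemma aux16 (a i : int) (m : nat) : i < (m.+1)%:Z -> (1 <= i) = true -> 0 < i /\ i <= m%:Z.
Proof. move=> *; lia. Qed.
Lemma aux17 (s sp B : nat) (L j0 j : int) : 1 <= L -> j0 = 1 - s%:Z + L -> j0 <= 0 ->
  (sp <= (absz j0).+1)%N -> j <= ((sp.-1 + B)%N)%:Z ->
  j < (((s.-1 + B).+1)%N)%:Z + - L.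
Proof. move=> *; lia. Qed.
Lemma aux18 (L : int) (t0 : nat) : L = 1 + t0%:Z -> 1 <= L.
Proof. move=> *; lia. Qed.
Lemma aux19 (i : int) (t0 : nat) : i < 1 + t0%:Z -> 1 <= i -> (t0 <= absz (i - 1))%N -> False.
Proof. move=> *; lia. Qed.
Lemma aux20 (L : int) : 1 <= L -> - (absz L)%:Z = - L.
Proof. move=> *; lia. Qed.
Lemma aux21 (L : int) (s B : nat) : (absz L < s)%N -> (s.-1 <= B)%N -> (absz L <= B)%N.
Proof. move=> *; lia. Qed.
Lemma aux22 (j0 : int) : j0 <= 0 -> - (absz j0)%:Z = j0.
Proof. move=> *; lia. Qed.

Lemma step B phi Q : valid phi 1 -> IR phi -> CFB B phi -> Q != 0 ->
  (forall j : int, 0 < j -> j <= ((size Q).-1 + B)%N%:Z ->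
     lcoef (lmul (lpoly Q) phi) j = 0) ->
  exists phi' P, [/\ valid phi' 1, IR phi', CFB B phi', P != 0 &
     (size P < size Q)%N /\ forall j : int, 0 < j -> j <= ((size P).-1 + B)%N%:Z ->
       lcoef (lmul (lpoly P) phi') j = 0].
Proof.
move=> v1 ir cfb hQ H.
have hex : exists t : nat, lcoef phi (1 + t%:Z) != 0.
  have [j [hj0 hj]] := ir 1 (oner_neq0 _).
  exists (absz (j - 1)); rewrite aux8 //.
  move: hj; rewrite (lmul_polyE' (Q := 1) phi j (M := 1)) ?size_poly1 //.
  by rewrite big_ord1 coef1 /= mul1r addr0.
have [L [hL1 vL hL]] : exists L : int, [/\ (1 <= L), (valid phi L) & (lcoef phi L != 0)].
  case: (ex_minnP hex) => t0 ht0 hmin.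
  exists (1 + t0%:Z); split; [exact: (@aux18 _ t0 (erefl _)) | | exact: ht0].
  move=> i hi; case: (ltrP i 1) => hi1; first exact: v1.
  case: (eqVneq (lcoef phi i) 0) => // hne; exfalso.
  rewrite -(aux8 (lt_le_trans ltr01 hi1)) in hne.
  exact: (aux19 hi hi1 (hmin _ hne)).
have [vpsi hpsi0 hprod] := linv_spec vL hL.
move: vpsi hpsi0 hprod; set psi := linv phi L => vpsi hpsi0 hprod.
have vpsi2 := valid_le vpsi (aux9 (le_trans ler01 hL1)).
have hd := decompE vpsi2.
move: hd; set A := pp psi _; set phi' := lfrac psi => hd.
have hcf : cf_step phi A phi'.
  split.
    exists (absz (L - lbound phi)).
    case: (ltrP L (lbound phi)) => h; first by rewrite (valid_lb (f := phi) h) eqxx in hL.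
    by rewrite aux10.
  split; first by move=> i /=; case: ifP.
  by move=> i; rewrite -(lmul_congr (fun _ => erefl) hd i); exact: hprod.
have hA := cfb _ (cf_pq_first hcf).
have cfb' : CFB B phi' by move=> A' h; apply: (cfb _ (cf_pq_next hcf h)).
have hAv : A`_(absz L) = lcoef psi (- L).
  by rewrite coef_poly ltnSn aux20.
have hLB : (absz L <= B)%N.
  have hs : (absz L < size A)%N.
    rewrite ltnNge; apply/negP => h; move: hpsi0.
    by rewrite -hAv nth_default // eqxx.
  exact: aux21 hs hA.
have v1' : valid phi' 1 by move=> i hi /=; rewrite leNgt hi.
have ir' : IR phi' := IR_next ir hprod hd.
have hsQ : (0 < size Q)%N by rewrite size_poly_gt0.
have vg := valid_mul (valid_lpoly (Q := Q)) vL.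
have hg0 := lmul_lead (valid_lpoly (Q := Q)) vL.
rewrite lpoly_lead // in hg0.
have [j0 ej0] : exists j0, j0 = 1 - (size Q)%:Z + L by eexists.
rewrite -ej0 in vg hg0.
move: vg hg0; set g := lmul (lpoly Q) phi => vg hg0.
have hg0' : lcoef g j0 != 0 by rewrite hg0 mulf_neq0 // lead_coef_eq0.
have hj0 : j0 <= 0.
  case: (lerP j0 0) => // hpos; exfalso.
  move: hg0'; rewrite H ?eqxx //.
  by rewrite ej0; apply: aux11 => //; rewrite -ej0.
have vgK := valid_le vg (eq_ind_r (fun x => _ <= x) (aux12 (size Q) hL1) ej0).
move: (chain hprod hd vgK); set P := pp g _ => hch.
have hPj : P`_(absz j0) = lcoef g j0.
  rewrite coef_poly aux13 //; last by rewrite ej0; exact: aux12.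
  by rewrite aux22.
have hP : P != 0.
  by apply/eqP => hP0; move: hg0'; rewrite -hPj hP0 coef0 eqxx.
have hsP : (size P <= (absz j0).+1)%N.
  apply/leq_sizeP => k hk; rewrite coef_poly; case: ifP => // _.
  by apply: vg; apply: aux14.
have hsPQ : (size P < size Q)%N.
  exact: leq_ltn_trans hsP (aux15 hL1 ej0 hj0).
exists phi', P; split => //; split => // j hj hjP.
have veps : valid (lfrac g) (((size Q).-1 + B).+1%N)%:Z.
  move=> i hi /=; case: ifP => // h1.
  by have [h2 h3] := aux16 0 hi h1; apply: H.
have := hch j hj.
rewrite (valid_mul veps vpsi) ?addr0 //.
exact: aux17 hL1 ej0 hj0 hsP hjP.
Qed.

Lemma key B : forall (n : nat) phi Q, (size Q <= n)%N -> valid phi 1 -> IR phi ->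
  CFB B phi -> Q != 0 ->
  exists j : int, [/\ 0 < j, j <= ((size Q).-1 + B)%N%:Z &
     lcoef (lmul (lpoly Q) phi) j != 0].
Proof.
elim=> [|n IH] phi Q hs v1 ir cfb hQ.
  by move: hs; rewrite leqn0 size_poly_eq0 (negbTE hQ).
case: (pselect (exists j : int, [/\ 0 < j, j <= ((size Q).-1 + B)%N%:Z &
     lcoef (lmul (lpoly Q) phi) j != 0])) => // hne; exfalso.
have H : forall j : int, 0 < j -> j <= ((size Q).-1 + B)%N%:Z ->
    lcoef (lmul (lpoly Q) phi) j = 0.
  move=> j h1 h2; case: (eqVneq (lcoef (lmul (lpoly Q) phi) j) 0) => // hn.
  by exfalso; apply: hne; exists j; split.
have [phi' [P [v1' ir' cfb' hP [hsP HP]]]] := step v1 ir cfb hQ H.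
have hsn : (size P <= n)%N by rewrite -ltnS; exact: leq_trans hsP hs.
have [j [h1 h2 h3]] := IH phi' P hsn v1' ir' cfb' hP.
by rewrite HP ?eqxx in h3.
Qed.

End K.


Section T.
Variable F : fieldType.
Implicit Types (f g h theta : laurent F) (Q P : {poly F}).

Lemma lmulXn theta (s : nat) i :
  lcoef (lmul (lpoly 'X^s) theta) i = lcoef theta (i + s%:Z).
Proof.
rewrite (lmul_polyE' (Q := 'X^s) theta i (M := s.+1)) ?size_polyXn //.
rewrite big_ord_recr /= big1 ?add0r; last first.
  by move=> u _; rewrite coefXn ltn_eqF ?mul0r.
by rewrite coefXn eqxx mul1r.
Qed.

Lemma lcoef_lfrac f i : lcoef (lfrac f) i = if 1 <= i then lcoef f i else 0.
Proof. by []. Qed.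

Lemma lfrac_pos f i : 0 < i -> lcoef (lfrac f) i = lcoef f i.
Proof. by move=> hi; rewrite lcoef_lfrac ifT. Qed.

Definition phiX theta (s : nat) := lfrac (lmul (lpoly 'X^s) theta).

Lemma phiX_coef theta s i : 0 < i -> lcoef (phiX theta s) i = lcoef theta (i + s%:Z).
Proof. by move=> hi; rewrite lcoef_lfrac ifT ?lmulXn. Qed.

Lemma aux30 (j : int) (s u : nat) : j + (s + u)%N%:Z = j + u%:Z + s%:Z.
Proof. lia. Qed.
Lemma aux32 (s q k : nat) : (s + q <= k)%N -> (q <= k - s)%N.
Proof. move=> *; lia. Qed.
Lemma aux31 (j : int) (u : nat) : 0 < j -> 0 < j + u%:Z.
Proof. move=> *; lia. Qed.

Lemma lmul_phiX theta s Q j : 0 < j ->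
  lcoef (lmul (lpoly ('X^s * Q)) theta) j = lcoef (lmul (lpoly Q) (phiX theta s)) j.
Proof.
move=> hj.
have hs : (size ('X^s * Q)%R <= s + size Q)%N.
  apply/leq_sizeP => k hk; rewrite coefXnM; case: ifP => // h.
  by apply/nth_default; apply: aux32.
rewrite (lmul_polyE' (Q := 'X^s * Q) theta j (M := (s + size Q)%N) hs).
rewrite (lmul_polyE' (Q := Q) (phiX theta s) j (M := size Q) (leqnn _)).
transitivity (\sum_(u < size Q) Q`_u * lcoef theta (j + u%:Z + s%:Z)); last first.
  by apply: eq_bigr => u _; rewrite phiX_coef ?aux31.
rewrite big_split_ord /= big1 ?add0r; last first.
  by move=> u _; rewrite coefXnM ltn_ord mul0r.
apply: eq_bigr => u _; rewrite coefXnM ifF ?addKn; last by rewrite ltnNge leq_addr.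
by rewrite aux30.
Qed.

Lemma IR_phiX theta s : Xadic_LC_counterexample theta -> IR (phiX theta s).
Proof.
move=> [eps [heps hX]] Q hQ.
case: (pselect (exists j : int, 0 < j /\ lcoef (lmul (lpoly Q) (phiX theta s)) j != 0)) => // hne.
exfalso.
have H : forall j : int, 0 < j -> lcoef (lmul (lpoly ('X^s * Q)) theta) j = 0.
  move=> j hj; rewrite lmul_phiX //.
  case: (eqVneq (lcoef (lmul (lpoly Q) (phiX theta s)) j) 0) => // hn.
  by exfalso; apply: hne; exists j.
have hd0 : ldist (lmul (lpoly ('X^s * Q)) theta) = 0.
  rewrite /ldist /lnorm; case: pselect => // [[t ht]]; exfalso.
  have : lcoef (lfrac (lmul (lpoly ('X^s * Q)) theta)) (1 + t%:Z) != 0 := ht.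
  by rewrite lfrac_pos ?aux31 // H ?eqxx // aux31.
have := hX s Q hQ.
by rewrite hd0 mulr0 => h; have := lt_le_trans heps h; rewrite ltxx.
Qed.

End T.


Section M.
Variable F : fieldType.

Lemma mul_upper m d (C : nat -> 'I_m -> F) (v : 'rV_d) l :
  (v *m upper_rows d C) 0 l = \sum_(k < d) v 0 k * C k.+1 l.
Proof. by rewrite mxE; apply: eq_bigr => k _; rewrite mxE. Qed.

Lemma SI0 m d (v : 'rV[F]_d) (l : 'I_m) : (d <= l)%N ->
  \sum_(k < d) v 0 k * Imat F (m:=m) k.+1 l = 0.
Proof.
move=> hl; rewrite big1 // => k _; rewrite /Imat eqSS ifF ?mulr0 //.
by apply/negbTE; rewrite neq_ltn (leq_trans (ltn_ord k) hl).
Qed.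

Lemma SI1 m d (v : 'rV[F]_d) (k0 : 'I_d) (l : 'I_m) : nat_of_ord l = k0 ->
  \sum_(k < d) v 0 k * Imat F (m:=m) k.+1 l = v 0 k0.
Proof.
move=> hl; rewrite (bigD1 k0) //= /Imat eqSS hl eqxx mulr1 big1 ?addr0 //.
move=> k hk; rewrite eqSS ifF ?mulr0 //; apply/negbTE.
by move: hk; apply: contra => /eqP h; apply/eqP/val_inj.
Qed.

Lemma SJ0 m d (v : 'rV[F]_d) (l : 'I_m) : (l < m - d)%N ->
  \sum_(k < d) v 0 k * Jmat F (m:=m) k.+1 l = 0.
Proof.
move=> hl; rewrite big1 // => k _; rewrite /Jmat ifF ?mulr0 //.
apply/negbTE/negP => /andP[_ /eqP h]; have := ltn_ord k; move: hl; rewrite h.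
clear; lia.
Qed.

Lemma SJ1 m d (v : 'rV[F]_d) (k0 : 'I_d) (l : 'I_m) : (d <= m)%N ->
  nat_of_ord l = (m - k0.+1)%N -> \sum_(k < d) v 0 k * Jmat F (m:=m) k.+1 l = v 0 k0.
Proof.
move=> hdm hl; have hk0 := ltn_ord k0.
rewrite (bigD1 k0) //= /Jmat hl eqxx ifT ?mulr1; last first.
  by apply/andP; split => //; apply: leq_trans hk0 hdm.
rewrite big1 ?addr0 // => k hk; rewrite ifF ?mulr0 //.
apply/negbTE/negP => /andP[/andP[_ hkm] /eqP h]; move/negP: hk; apply.
apply/eqP/val_inj => /=; move: h hkm hk0 hdm; clear; lia.
Qed.

Lemma net_rank theta (D m d1 d2 d3 : nat) :
  (D < m)%N -> (d1 + d2 + d3 <= m - D)%N ->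
  (forall Q : {poly F}, Q != 0 -> (size Q <= d2)%N -> exists j : nat,
     [/\ (0 < j)%N, (j <= (size Q).-1 + D.+1)%N &
      \sum_(u < d2) Q`_u * lcoef theta (j + u + d1)%N%:Z != 0]) ->
  \rank (col_mx (col_mx (upper_rows d1 (@Imat F m)) (upper_rows d2 (@Hmat F theta m)))
     (upper_rows d3 (@Jmat F m))) = (d1 + d2 + d3)%N.
Proof.
move=> hDm hd hkey.
apply/eqP; rewrite -[_ == _]/(row_free _) -kermx_eq0; apply/rowV0P => v /sub_kermxP hv.
rewrite -[v]hsubmxK -[lsubmx v]hsubmxK !mul_row_col in hv.
set v1 := lsubmx (lsubmx v) in hv *; set v2 := rsubmx (lsubmx v) in hv *.
set v3 := rsubmx v in hv *.
have E : forall l : 'I_m, \sum_(k < d1) v1 0 k * Imat F (m:=m) k.+1 l +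
    \sum_(k < d2) v2 0 k * Hmat theta (m:=m) k.+1 l +
    \sum_(k < d3) v3 0 k * Jmat F (m:=m) k.+1 l = 0.
  move=> l; have := congr1 (fun A : 'M[F]_(1, m) => A 0 l) hv.
  have addE : forall (A B : 'M[F]_(1, m)) i j, (A + B) i j = A i j + B i j.
    by move=> *; rewrite mxE.
  by rewrite !addE !mul_upper [in RHS]mxE.
have h2 : v2 = 0.
  set Q : {poly F} := \sum_(k < d2) v2 0 k *: 'X^k.
  have hQk : forall k : 'I_d2, Q`_k = v2 0 k.
    move=> k; rewrite coef_sumMXn (big_pred1 k) //.
  have hQs : (size Q <= d2)%N.
    apply/leq_sizeP => i hi; rewrite coef_sumMXn big_pred0 // => k /=.
    by apply/negbTE; rewrite neq_ltn (leq_trans (ltn_ord k) hi).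
  case: (eqVneq Q 0) => hQ; last first.
    exfalso; have [j [hj1 hj2 hj3]] := hkey Q hQ hQs.
    have hl : (d1 + j - 1 < m)%N.
      have hs0 : (0 < size Q)%N by rewrite size_poly_gt0.
      move: hj1 hj2 hQs hd hDm hs0; clear; lia.
    have := E (Ordinal hl).
    rewrite SI0 /=; last by move: hj1; clear; lia.
    rewrite SJ0 /=; last first.
      have hs0 : (0 < size Q)%N by rewrite size_poly_gt0.
      move: hj1 hj2 hQs hd hDm hs0; clear; lia.
    rewrite add0r addr0 => hz; move/eqP: hj3; apply; rewrite -[RHS]hz.
    apply: eq_bigr => k _; rewrite /Hmat /= hQk; congr (_ * lcoef _ _).
    by move: hj1; clear; lia.
  by apply/rowP => k; rewrite [RHS]mxE -hQk hQ coef0.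
have hS2 : forall l : 'I_m, \sum_(k < d2) v2 0 k * Hmat theta (m:=m) k.+1 l = 0.
  by move=> l; rewrite big1 // => k _; rewrite h2 mxE mul0r.
have h1 : v1 = 0.
  apply/rowP => k0; rewrite [RHS]mxE.
  have hl : (k0 < m)%N by move: (ltn_ord k0) hd; clear; lia.
  have := E (Ordinal hl).
  rewrite (@SI1 m d1 v1 k0 (Ordinal hl)) // hS2 addr0 SJ0 ?addr0 //=.
  by move: (ltn_ord k0) hd; clear; lia.
have h3 : v3 = 0.
  apply/rowP => k0; rewrite [RHS]mxE.
  have hl : (m - k0.+1 < m)%N by move: hDm; clear; lia.
  have hd3 : (d3 <= m)%N by move: hd; clear; lia.
  have := E (Ordinal hl).
  rewrite (@SJ1 m d3 v3 k0 (Ordinal hl) hd3) // hS2 addr0 SI0 ?add0r //=.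
  by move: (ltn_ord k0) hd; clear; lia.
by rewrite -[v]hsubmxK -[lsubmx v]hsubmxK -/v1 -/v2 -/v3 h1 h2 h3 !row_mx0.
Qed.

Lemma aux40 (j : int) (u d1 : nat) : 0 < j ->
  ((absz j + u + d1)%N)%:Z = j + u%:Z + d1%:Z.
Proof. move=> *; lia. Qed.
Lemma aux41 (j : int) (s D : nat) : 0 < j -> j <= ((s.-1 + D.+1)%N)%:Z ->
  (0 < absz j)%N /\ (absz j <= s.-1 + D.+1)%N.
Proof. move=> *; lia. Qed.

Lemma main theta (D : nat) :
  Xadic_LC_counterexample theta ->
  (forall (r : nat) (A : {poly F}),
      cf_pq (lfrac (lmul (lpoly 'X^r) theta)) A -> ((size A).-1 <= D.+1)%N) ->
  forall m : nat, (D < m)%N ->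
    digital_net D (@Imat F m) (@Hmat _ theta m) (@Jmat F m).
Proof.
move=> hX hcf m hm; split => // d1 d2 d3 hd.
apply: (@net_rank theta D m d1 d2 d3) => // Q hQ hQs.
have v1 : valid (phiX theta d1) 1 by move=> i hi; rewrite lcoef_lfrac leNgt hi.
have [j [hj1 hj2 hj3]] := key (leqnn (size Q)) v1 (IR_phiX d1 hX) (hcf d1) hQ.
have [h1 h2] := aux41 hj1 hj2.
exists (absz j); split => //.
suff -> : \sum_(u < d2) Q`_u * lcoef theta ((absz j + u + d1)%N)%:Z =
   lcoef (lmul (lpoly Q) (phiX theta d1)) j by [].
rewrite (lmul_polyE' (Q := Q) _ j (M := d2) hQs).
apply: eq_bigr => u _; rewrite phiX_coef ?aux31 //.
by rewrite aux40.
Qed.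

End M.

Theorem lemma4 (p : nat) (hp : prime p) (theta : laurent 'F_p) (D : nat) :
  Xadic_LC_counterexample theta ->
  (forall (r : nat) (A : {poly 'F_p}),
      cf_pq (lfrac (lmul (lpoly 'X^r) theta)) A -> ((size A).-1 <= D.+1)%N) ->
  forall m : nat, (D < m)%N ->
    digital_net D (@Imat 'F_p m) (@Hmat _ theta m) (@Jmat 'F_p m).
Proof. exact: main. Qed.
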